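(* Let $V$ be a nonempty finite set and let $B \subseteq \mathbb{Z}^V$ be a nonempty set satisfying ($\Delta$-EXC): for any $p, q \in B$ and any $u \in \operatorname{supp}(q-p)$, there exists $\alpha \in \Phi_B(p,q)$ with $u \in \operatorname{supp}(\alpha)$. Then $B$ is hole-free, i.e., $B = \operatorname{conv}(B) \cap \mathbb{Z}^V$.
   Context: For $t \in \mathbb{R}^V$, $\operatorname{supp}(t) = \{u \in V : t(u) \neq 0\}$; $\|p\|_1 = \sum_{u \in V}|p(u)|$; $\chi_u$ is the $u$-th unit vector; $\operatorname{conv}$ denotes convex hull. Let $\Phi = \{\pm \chi_u : u \in V\} \cup \{\pm\chi_u \pm \chi_v : u, v \in V, u \ne v\}$. For $p, q \in \mathbb{Z}^V$, $\Phi(p,q) = \{\alpha \in \Phi : \|q - (p+\alpha)\|_1 = \|q-p\|_1 - \|\alpha\|_1\}$, and for $B \subseteq \mathbb{Z}^V$ and $p,q \in B$, $\Phi_B(p,q) = \{\alpha \in \Phi(p,q) : p + \alpha \in B\}$. *)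

(* Defs.v *)
From HB Require Import structures.
From mathcomp Require Import all_boot all_order all_algebra.
From mathcomp Require Import reals.
Set Implicit Arguments. Unset Strict Implicit. Unset Printing Implicit Defensive.
Import Order.TTheory GRing.Theory Num.Theory.
Local Open Scope ring_scope.

Notation zvec V := {ffun V -> int}.

Definition supp (V : finType) (t : zvec V) : {set V} := [set u | t u != 0].

Definition norm1 (V : finType) (p : zvec V) : int := \sum_(u : V) `|p u|.

Definition chi (V : finType) (u : V) : zvec V := [ffun w => (w == u)%:Z].

Definition inPhi (V : finType) (a : zvec V) : Prop :=
  (exists u : V, a = chi u \/ a = - chi u) \/
  (exists u v : V, u != v /\ exists s t : int, (s = 1 \/ s = -1) /\ (t = 1 \/ t = -1)
       /\ a = chi u *~ s + chi v *~ t).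

Definition Phi_pq (V : finType) (p q a : zvec V) : Prop :=
  inPhi a /\ norm1 (q - (p + a)) = norm1 (q - p) - norm1 a.

Definition Phi_B (V : finType) (B : zvec V -> Prop) (p q a : zvec V) : Prop :=
  Phi_pq p q a /\ B (p + a).

Definition delta_exc (V : finType) (B : zvec V -> Prop) : Prop :=
  forall p q : zvec V, B p -> B q -> forall u : V, u \in supp (q - p) ->
    exists a : zvec V, Phi_B B p q a /\ u \in supp a.

Definition in_conv (R : realType) (V : finType) (B : zvec V -> Prop)
    (x : V -> R) : Prop :=
  exists (n : nat) (pts : 'I_n -> zvec V) (lam : 'I_n -> R),
    (forall i, B (pts i)) /\ (forall i, 0 <= lam i) /\ \sum_(i < n) lam i = 1 /\
    forall w : V, x w = \sum_(i < n) lam i * ((pts i w)%:~R).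

Definition hole_free (R : realType) (V : finType) (B : zvec V -> Prop) : Prop :=
  forall z : zvec V, B z <-> @in_conv R V B (fun w => (z w)%:~R).

(* Main.v *)
Require Import Defs.
From HB Require Import structures.
From mathcomp Require Import all_boot all_order all_algebra.
From mathcomp Require Import reals.
From mathcomp Require Import zify.
From Stdlib Require Import ClassicalEpsilon Classical.
Set Implicit Arguments. Unset Strict Implicit. Unset Printing Implicit Defensive.
Import Order.TTheory GRing.Theory Num.Theory.
Local Open Scope ring_scope.

Definition pb (P : Prop) : bool := if excluded_middle_informative P then true else false.
Lemma pbP (P : Prop) : reflect P (pb P).
Proof. rewrite /pb; case: excluded_middle_informative => H; by constructor. Qed.

Lemma ffunMzE (V : finType) (f : zvec V) (g : int) x : (f *~ g) x = f x *~ g.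
Proof. case: g => n /=. by rewrite ffunMnE. rewrite !NegzE !mulrNz.
rewrite ffunE ffunMnE. done. Qed.

Lemma chiZE (V : finType) (u x : V) (g : int) : (chi u *~ g) x = if x == u then g else 0.
Proof. rewrite ffunMzE /chi ffunE; case: (x == u) => /=; lia. Qed.

Lemma chiE (V : finType) (u w : V) : chi u w = if w == u then 1 else 0.
Proof. rewrite /chi ffunE. by case: eqP. Qed.
Lemma chi_ne (V : finType) (u w : V) : chi u w != 0 -> w = u.
Proof. rewrite chiE; case: (w =P u) => [-> _ //| _]; by rewrite eqxx. Qed.

Lemma zaddE (V : finType) (f h : zvec V) x : (f + h) x = f x + h x.
Proof. by rewrite ffunE. Qed.
Lemma zoppE (V : finType) (f : zvec V) x : (- f) x = - f x.
Proof. by rewrite !ffunE. Qed.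
Lemma zsubE (V : finType) (f h : zvec V) x : (f - h) x = f x - h x.
Proof. by rewrite !ffunE. Qed.

Ltac vec := apply/ffunP => ?; rewrite ?(zaddE, zsubE, zoppE, chiZE) /=;
  repeat (case: eqP => [?|?]); subst;
  try (match goal with H : is_true (?a != ?a) |- _ => by rewrite eqxx in H end);
  try (match goal with H : ?a <> ?a |- _ => by case: H end);
  try lia.

Lemma sg_of_conf (D e : int) : (e = 1 \/ e = -1) -> `|D - e| = `|D| - `|e| -> e = Num.sg D /\ D != 0.
Proof. move=> he h; split; [|apply/eqP]; lia. Qed.

Lemma norm1_ge (V : finType) (x : zvec V) w : `|x w| <= norm1 x.
Proof. rewrite /norm1 (bigD1 w) //= lerDl sumr_ge0 // => i _; exact: normr_ge0. Qed.

Section Exch.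
Variable V : finType.
Variable B : zvec V -> Prop.
Hypothesis Hexc : delta_exc B.

Lemma conf (a b al : zvec V) : Phi_pq a b al -> forall x, `|(b - a) x - al x| = `|(b - a) x| - `|al x|.
Proof.
case=> _ H.
have E : norm1 (b - a - al) = norm1 (b - a) - norm1 al by rewrite -H; congr norm1; rewrite opprD addrA.
have S0 : \sum_y (`|(b - a) y - al y| + `|al y| - `|(b - a) y|) = 0.
  rewrite !big_split /= sumrN.
  have -> : \sum_y `|(b - a) y - al y| = norm1 (b - a - al).
    rewrite /norm1; apply: eq_bigr => y _; by rewrite !ffunE.
  by rewrite E /norm1 subrK subrr.
have Hnn : forall y, predT y -> 0 <= `|(b - a) y - al y| + `|al y| - `|(b - a) y| by move=> y _; lia.
move=> x; have := psumr_eq0P Hnn S0 (i:=x) isT.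
move=> H1; lia.
Qed.

Lemma exchW (a b : zvec V) w : B a -> B b -> (b - a) w != 0 ->
  exists y c, B (a + (chi w *~ Num.sg ((b - a) w) + chi y *~ c)) /\
    norm1 (b - (a + (chi w *~ Num.sg ((b - a) w) + chi y *~ c))) < norm1 (b - a) /\
    (c = 0 \/ (y != w /\ (b - a) y != 0 /\ c = Num.sg ((b - a) y))).
Proof.
move=> Ba Bb hw.
have [al [[Hphi Bal] Hwal]] : exists al, Phi_B B a b al /\ w \in supp al.
  by apply: Hexc => //; rewrite inE.
move: Hwal; rewrite inE => Hwal.
have Hc := conf Hphi.
have Hn : norm1 (b - (a + al)) < norm1 (b - a).
  rewrite Hphi.2 ltrBlDr ltrDl; apply: (lt_le_trans _ (norm1_ge al w)); by rewrite normr_gt0.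
suff [y [c [Eal Hyc]]] : exists y c, al = chi w *~ Num.sg ((b - a) w) + chi y *~ c /\
    (c = 0 \/ (y != w /\ (b - a) y != 0 /\ c = Num.sg ((b - a) y))).
  by exists y, c; rewrite -Eal.
move: hw Hc; generalize (b - a) => D hw Hc.
case: Hphi.1 => [[u [Eal|Eal]]|[u [v [Huv [s1 [t1 [Hs [Ht Eal]]]]]]]]; rewrite Eal in Hwal Hc.
- have wu := chi_ne Hwal.
  subst u; have := Hc w; rewrite chiE eqxx => /(sg_of_conf (or_introl erefl)) [<- _].
  exists w, 0; split; [rewrite Eal; apply/ffunP => x; rewrite zaddE !chiZE ?chiE; case: eqP => //=; lia|by left].
- have wu : w = u by apply: chi_ne; move: Hwal; rewrite zoppE oppr_eq0.
  subst u; have := Hc w; rewrite zoppE chiE eqxx /=.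
  move=> /(sg_of_conf (or_intror erefl)) [<- _].
  exists w, 0; split; [rewrite Eal; apply/ffunP => x; rewrite zaddE !chiZE ?zoppE ?chiE; case: eqP => //= _; lia|by left].
- move: Hwal; rewrite zaddE !chiZE.
  case: (eqVneq w u) => [wu|wu].
  + subst u; rewrite (negbTE Huv) addr0 => _.
    have := Hc w; rewrite zaddE !chiZE eqxx (negbTE Huv) addr0 => /(sg_of_conf Hs) [Es _].
    have := Hc v; rewrite zaddE !chiZE eqxx eq_sym (negbTE Huv) add0r => /(sg_of_conf Ht) [Et Dv].
    exists v, t1; rewrite Eal -Es; split => //; right; split => //; by rewrite eq_sym.
  + case: (eqVneq w v) => [wv|wv]; last by rewrite addr0.
    subst v => _.
    have := Hc w; rewrite zaddE !chiZE eqxx (negbTE wu) add0r => /(sg_of_conf Ht) [Et _].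
    have := Hc u; rewrite zaddE !chiZE eqxx (negbTE Huv) addr0 => /(sg_of_conf Hs) [Es Du].
    exists u, s1; rewrite Eal -Et addrC; split => //; right; split => //.
Qed.
End Exch.

Ltac neqs := repeat match goal with
  | H : is_true (?a != ?b) |- context[?a == ?b] => rewrite (negbTE H)
  | H : is_true (?a != ?b) |- context[?b == ?a] => rewrite [b == a]eq_sym (negbTE H)
  end; rewrite ?eqxx.

Lemma supp3 (V : finType) (y u v w : V) a b c : (chi u *~ a + chi v *~ b + chi w *~ c) y != 0 ->
  y = u \/ y = v \/ y = w.
Proof. rewrite !zaddE !chiZE; case: (y =P u) => [->|_]; [by left|]; case: (y =P v) => [->|_]; [by right; left|];
  case: (y =P w) => [->|_]; [by right; right|]; by rewrite !addr0 eqxx. Qed.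
Lemma supp2 (V : finType) (y u v : V) a b : (chi u *~ a + chi v *~ b) y != 0 -> y = u \/ y = v.
Proof. rewrite !zaddE !chiZE; case: (y =P u) => [->|_]; [by left|]; case: (y =P v) => [->|_]; [by right|];
  by rewrite !addr0 eqxx. Qed.

Definition dot (V : finType) (s : V -> int) (a : zvec V) : int := \sum_x s x * a x.

Lemma dot_add (V : finType) (s : V -> int) a b : dot s (a + b) = dot s a + dot s b.
Proof. rewrite /dot -big_split; apply: eq_bigr => x _; by rewrite zaddE mulrDr. Qed.
Lemma dot_sub (V : finType) (s : V -> int) a b : dot s (a - b) = dot s a - dot s b.
Proof. rewrite /dot -sumrB; apply: eq_bigr => x _; by rewrite zsubE mulrBr. Qed.

Lemma norm1N (V : finType) (a b : zvec V) : norm1 (a - b) = norm1 (b - a).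
Proof. rewrite /norm1; apply: eq_bigr => x _; rewrite !zsubE -opprB normrN //. Qed.
Lemma norm1_ge0 (V : finType) (a : zvec V) : 0 <= norm1 a.
Proof. rewrite /norm1; apply: sumr_ge0 => x _; exact: normr_ge0. Qed.
Lemma sgpm (x : int) : x != 0 -> Num.sg x = 1 \/ Num.sg x = -1.
Proof. move=> h; lia. Qed.

Section Near.
Variable V : finType.
Variable B : zvec V -> Prop.
Hypothesis Hexc : delta_exc B.
Variables z p : zvec V.
Hypothesis HBp : B p.
Hypothesis Hnear : forall x, B x -> norm1 (z - p) <= norm1 (z - x).

Definition gg (u : V) : int := Num.sg ((z - p) u).
Definition dl (x : V) (a : int) : int := `|(z - p) x - a| - `|(z - p) x|.

Lemma distE al : norm1 (z - (p + al)) = norm1 (z - p) + \sum_x dl x (al x).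
Proof. rewrite /norm1 -big_split /=; apply: eq_bigr => x _; rewrite /dl !zsubE zaddE; lia. Qed.

Lemma nearS al : B (p + al) -> 0 <= \sum_x dl x (al x).
Proof. move/Hnear; rewrite distE; lia. Qed.

Lemma dl0 x : dl x 0 = 0.
Proof. by rewrite /dl subr0 subrr. Qed.

Lemma sum1 (F : V -> int -> int) u a : (forall x, F x 0 = 0) ->
  \sum_x F x ((chi u *~ a) x) = F u a.
Proof.
move=> F0; rewrite (bigD1 u) //= chiZE eqxx big1 ?addr0 // => x /negbTE hx.
by rewrite chiZE hx F0.
Qed.

Lemma sum2 (F : V -> int -> int) u v a b : (forall x, F x 0 = 0) -> u != v ->
  \sum_x F x ((chi u *~ a + chi v *~ b) x) = F u a + F v b.
Proof.
move=> F0 uv; rewrite (bigD1 u) //= (bigD1 v) /=; last by rewrite eq_sym.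
rewrite big1 ?addr0.
  have vu : v != u by rewrite eq_sym.
  by rewrite !zaddE !chiZE !eqxx (negbTE uv) (negbTE vu) addr0 add0r.
move=> x /andP [xu xv]; by rewrite zaddE !chiZE (negbTE xu) (negbTE xv) addr0 F0.
Qed.

Lemma sum3 (F : V -> int -> int) u v w a b c : (forall x, F x 0 = 0) -> u != v -> u != w -> v != w ->
  \sum_x F x ((chi u *~ a + chi v *~ b + chi w *~ c) x) = F u a + F v b + F w c.
Proof.
move=> F0 uv uw vw; rewrite (bigD1 u) //= (bigD1 v) /=; last by rewrite eq_sym.
rewrite (bigD1 w) /=; last by rewrite eq_sym uw eq_sym vw.
rewrite big1 ?addr0.
  have vu : v != u by rewrite eq_sym.
  have wu : w != u by rewrite eq_sym.
  have wv : w != v by rewrite eq_sym.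
  by rewrite !zaddE !chiZE !eqxx (negbTE uv) (negbTE vu) (negbTE uw) (negbTE wu) (negbTE vw) (negbTE wv) !addr0 !add0r addrA.
move=> x /andP [/andP [xu xv] xw]; by rewrite !zaddE !chiZE (negbTE xu) (negbTE xv) (negbTE xw) !addr0 F0.
Qed.

Lemma near1 u a : B (p + chi u *~ a) -> 0 <= dl u a.
Proof. by move/nearS; rewrite sum1 //; exact: dl0. Qed.
Lemma near2 u v a b : u != v -> B (p + (chi u *~ a + chi v *~ b)) -> 0 <= dl u a + dl v b.
Proof. by move=> uv /nearS; rewrite sum2 //; exact: dl0. Qed.
Lemma near3 u v w a b c : u != v -> u != w -> v != w ->
  B (p + (chi u *~ a + chi v *~ b + chi w *~ c)) -> 0 <= dl u a + dl v b + dl w c.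
Proof. by move=> uv uw vw /nearS; rewrite sum3 //; exact: dl0. Qed.

Lemma gg_pm x : (z - p) x != 0 -> gg x = 1 \/ gg x = -1.
Proof. rewrite /gg => h; lia. Qed.
Lemma dl_nz x a : (z - p) x != 0 -> (a = 1 \/ a = -1) -> dl x a = - (gg x * a).
Proof. rewrite /dl /gg => h [->|->]; lia. Qed.
Lemma dl_g x : (z - p) x != 0 -> dl x (gg x) = -1.
Proof. move=> h; rewrite dl_nz //; last exact: gg_pm. case: (gg_pm h) => ->; lia. Qed.
Lemma dl_z x a : (z - p) x = 0 -> dl x a = `|a|.
Proof. rewrite /dl => ->; lia. Qed.
Lemma sg_gg x : (z - p) x != 0 -> Num.sg (gg x) = gg x.
Proof. rewrite /gg => h; lia. Qed.
Lemma neq_zn u v : (z - p) u != 0 -> (z - p) v = 0 -> u != v.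
Proof. by move=> hu hv; apply/eqP => E; move: hu; rewrite E hv eqxx. Qed.

Lemma F0 u v t : (z - p) u != 0 -> (z - p) v = 0 -> (t = 1 \/ t = -1) ->
  B (p + (chi u *~ gg u + chi v *~ t)) -> B (p + (chi u *~ gg u + chi v *~ (-t))) -> False.
Proof.
move=> hu hv ht Ba Bb.
have uv := neq_zn hu hv.
have Eba : p + (chi u *~ gg u + chi v *~ (-t)) - (p + (chi u *~ gg u + chi v *~ t)) = chi v *~ (- (t + t)) by vec.
have := exchW Hexc Ba Bb (w := v); rewrite Eba chiZE eqxx.
case=> [|y [c [By [_ Hc]]]]; first by apply/eqP; lia.
have c0 : c = 0.
  case: Hc => // [[yv [Hy _]]]; by move: Hy; rewrite chiZE (negbTE yv) eqxx.
subst c.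
have E : p + (chi u *~ gg u + chi v *~ t) + (chi v *~ Num.sg (- (t + t)) + chi y *~ 0) = p + chi u *~ gg u by vec.
rewrite E in By; have := near1 By; rewrite dl_g //.
Qed.

Lemma Fg u u' v t : (z - p) u != 0 -> (z - p) u' != 0 -> (z - p) v = 0 -> (t = 1 \/ t = -1) ->
  B (p + (chi u *~ gg u + chi v *~ t)) -> B (p + (chi u' *~ gg u' + chi v *~ (-t))) -> False.
Proof.
move=> hu hu' hv ht Ba Bb.
case: (eqVneq u u') => [E|uu']; first by subst u'; exact: F0 hu hv ht Ba Bb.
have uv := neq_zn hu hv; have u'v := neq_zn hu' hv.
have gu := gg_pm hu; have gu' := gg_pm hu'.
have Eba : p + (chi u' *~ gg u' + chi v *~ (-t)) - (p + (chi u *~ gg u + chi v *~ t)) =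
   chi u' *~ gg u' + chi u *~ (- gg u) + chi v *~ (- (t + t)) by vec.
have := exchW Hexc Ba Bb (w := u'); rewrite Eba.
have -> : (chi u' *~ gg u' + chi u *~ (- gg u) + chi v *~ (- (t + t))) u' = gg u'.
  by rewrite !zaddE !chiZE; neqs; rewrite ?add0r ?addr0.
rewrite sg_gg //.
case=> [|y [c [By [_ Hc]]]]; first by apply/eqP; lia.
case: Hc => [c0|[yu' [Hy Ec]]].
- subst c.
  have E : p + (chi u *~ gg u + chi v *~ t) + (chi u' *~ gg u' + chi y *~ 0) =
     p + (chi u *~ gg u + chi v *~ t + chi u' *~ gg u') by vec.
  have vu' : v != u' by rewrite eq_sym.
  rewrite E in By; have := near3 uv uu' vu' By.
  rewrite dl_g // dl_z // dl_g //; lia.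
- case: (supp3 Hy) => [yu2|[yu|yv]]; first by move: yu'; rewrite yu2 eqxx.
  + subst y; move: Ec; rewrite !zaddE !chiZE; neqs; rewrite ?add0r ?addr0 => Ec.
    have E : p + (chi u *~ gg u + chi v *~ t) + (chi u' *~ gg u' + chi u *~ c) =
       p + (chi u' *~ gg u' + chi v *~ t) by rewrite Ec; vec.
    rewrite E in By; exact: F0 hu' hv ht By Bb.
  + subst y; move: Ec; rewrite !zaddE !chiZE; neqs; rewrite ?add0r ?addr0 => Ec.
    have E : p + (chi u *~ gg u + chi v *~ t) + (chi u' *~ gg u' + chi v *~ c) =
       p + (chi u *~ gg u + chi u' *~ gg u') by rewrite Ec; vec.
    rewrite E in By; have := near2 uu' By; rewrite !dl_g //; lia.
Qed.

Lemma Sg u v t : (z - p) u != 0 -> (z - p) v = 0 -> (t = 1 \/ t = -1) ->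
  B (p + chi v *~ t) -> B (p + (chi u *~ gg u + chi v *~ (-t))) -> False.
Proof.
move=> hu hv ht Ba Bb.
have uv := neq_zn hu hv; have gu := gg_pm hu.
have Eba : p + (chi u *~ gg u + chi v *~ (-t)) - (p + chi v *~ t) =
   chi u *~ gg u + chi v *~ (- (t + t)) by vec.
have := exchW Hexc Ba Bb (w := u); rewrite Eba.
have -> : (chi u *~ gg u + chi v *~ (- (t + t))) u = gg u.
  by rewrite !zaddE !chiZE; neqs; rewrite ?add0r ?addr0.
rewrite sg_gg //.
case=> [|y [c [By [_ Hc]]]]; first by apply/eqP; lia.
case: Hc => [c0|[yu [Hy Ec]]].
- subst c.
  have E : p + chi v *~ t + (chi u *~ gg u + chi y *~ 0) = p + (chi u *~ gg u + chi v *~ t) by vec.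
  rewrite E in By; exact: (Fg hu hu hv ht By Bb).
- case: (supp2 Hy) => [yu2|yv]; first by move: yu; rewrite yu2 eqxx.
  subst y; move: Ec; rewrite !zaddE !chiZE; neqs; rewrite ?add0r ?addr0 => Ec.
  have E : p + chi v *~ t + (chi u *~ gg u + chi v *~ c) = p + chi u *~ gg u by rewrite Ec; vec.
  rewrite E in By; have := near1 By; rewrite dl_g //.
Qed.

Definition Mix (x : V) (t : int) : Prop :=
  exists u, (z - p) u != 0 /\ B (p + (chi u *~ gg u + chi x *~ t)).

Lemma Pg u v w t t' : (z - p) u != 0 -> (z - p) v = 0 -> (z - p) w = 0 -> v != w ->
  (t = 1 \/ t = -1) -> (t' = 1 \/ t' = -1) ->
  B (p + (chi v *~ t + chi w *~ t')) -> B (p + (chi u *~ gg u + chi v *~ (-t))) -> Mix w t'.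
Proof.
move=> hu hv hw vw ht ht' Bc Bm.
have uv := neq_zn hu hv; have uw := neq_zn hu hw; have gu := gg_pm hu.
have Emc : p + (chi u *~ gg u + chi v *~ (-t)) - (p + (chi v *~ t + chi w *~ t')) =
   chi u *~ gg u + chi v *~ (- (t + t)) + chi w *~ (- t') by vec.
have := exchW Hexc Bc Bm (w := u); rewrite Emc.
have -> : (chi u *~ gg u + chi v *~ (- (t + t)) + chi w *~ (- t')) u = gg u.
  by rewrite !zaddE !chiZE; neqs; rewrite ?add0r ?addr0.
rewrite sg_gg //.
case=> [|y [c [By [_ Hc]]]]; first by apply/eqP; lia.
case: Hc => [c0|[yu [Hy Ec]]].
- subst c.
  have E : p + (chi v *~ t + chi w *~ t') + (chi u *~ gg u + chi y *~ 0) =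
    p + (chi u *~ gg u + chi v *~ t + chi w *~ t') by vec.
  rewrite E in By.
  have Emr : p + (chi u *~ gg u + chi v *~ (-t)) - (p + (chi u *~ gg u + chi v *~ t + chi w *~ t')) =
     chi v *~ (- (t + t)) + chi w *~ (- t') by vec.
  have := exchW Hexc By Bm (w := v); rewrite Emr.
  have -> : (chi v *~ (- (t + t)) + chi w *~ (- t')) v = - (t + t).
    by rewrite !zaddE !chiZE; neqs; rewrite ?add0r ?addr0.
  case=> [|y2 [c2 [By2 [_ Hc2]]]]; first by apply/eqP; lia.
  case: Hc2 => [c0|[y2v [Hy2 Ec2]]].
  + subst c2; exists u; split => //.
    have E2 : p + (chi u *~ gg u + chi v *~ t + chi w *~ t') + (chi v *~ Num.sg (- (t + t)) + chi y2 *~ 0)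
      = p + (chi u *~ gg u + chi w *~ t') by vec.
    by rewrite -E2.
  + case: (supp2 Hy2) => [y2v2|y2w]; first by move: y2v; rewrite y2v2 eqxx.
    subst y2; move: Ec2; rewrite !zaddE !chiZE; neqs; rewrite ?add0r ?addr0 => Ec2.
    have E2 : p + (chi u *~ gg u + chi v *~ t + chi w *~ t') + (chi v *~ Num.sg (- (t + t)) + chi w *~ c2)
      = p + chi u *~ gg u by rewrite Ec2; vec.
    rewrite E2 in By2; have := near1 By2; rewrite dl_g //.
- case: (supp3 Hy) => [yu2|[yv|yw]]; first by move: yu; rewrite yu2 eqxx.
  + subst y; move: Ec; rewrite !zaddE !chiZE; neqs; rewrite ?add0r ?addr0 => Ec.
    exists u; split => //.
    have E : p + (chi v *~ t + chi w *~ t') + (chi u *~ gg u + chi v *~ c) =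
      p + (chi u *~ gg u + chi w *~ t') by rewrite Ec; vec.
    by rewrite -E.
  + subst y; move: Ec; rewrite !zaddE !chiZE; neqs; rewrite ?add0r ?addr0 => Ec.
    have E : p + (chi v *~ t + chi w *~ t') + (chi u *~ gg u + chi w *~ c) =
      p + (chi u *~ gg u + chi v *~ t) by rewrite Ec; vec.
    rewrite E in By; exfalso; exact: (Fg hu hu hv ht By Bm).
Qed.

Definition ss (x : V) : int :=
  if (z - p) x != 0 then gg x else if pb (Mix x 1) then -1 else if pb (Mix x (-1)) then 1 else 0.

Lemma ss_range x : ss x = 1 \/ ss x = 0 \/ ss x = -1.
Proof.
rewrite /ss; case: ifP => [h|_]; first by case: (gg_pm h) => ->; auto.
case: ifP => _; first by auto. case: ifP => _; auto.
Qed.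

Lemma ss_nz x : (z - p) x != 0 -> ss x = gg x.
Proof. by rewrite /ss => ->. Qed.

Lemma ss_mix x t : (z - p) x = 0 -> (t = 1 \/ t = -1) -> Mix x t -> ss x = - t.
Proof.
move=> hx ht M; rewrite /ss hx eqxx /=.
case: ht => Et; subst t.
- by case: pbP.
- case: pbP => [[u [hu Bu]]|_].
    by case: M => u' [hu' Bu']; exfalso; exact: (Fg hu hu' hx (or_introl erefl) Bu Bu').
  by case: pbP.
Qed.

Lemma ss_inv x e : (z - p) x = 0 -> (e = 1 \/ e = -1) -> ss x * e = 1 -> Mix x (- e).
Proof.
move=> hx he; rewrite /ss hx eqxx /=.
case: pbP => [M|_] H; first by have -> : - e = 1 by lia.
move: H; case: pbP => [M|_] H; first by have -> : - e = -1 by lia.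
lia.
Qed.

Lemma LLgz w y e c : (z - p) w != 0 -> (z - p) y = 0 -> (e = 1 \/ e = -1) -> (c = 1 \/ c = -1) ->
  B (p + (chi w *~ e + chi y *~ c)) -> ss w * e + ss y * c <= 0.
Proof.
move=> hw hy he hc Bwy.
have wy := neq_zn hw hy.
have := near2 wy Bwy; rewrite dl_nz // dl_z // ss_nz //.
have gw := gg_pm hw.
have [H1|H1] : gg w * e = 1 \/ gg w * e = -1 by case: gw => ->; case: he => ->; auto.
- have Ee : e = gg w by case: gw => E; rewrite E in H1 *; lia.
  have M : Mix y c by exists w; split => //; rewrite -Ee.
  rewrite (ss_mix hy hc M) H1; case: hc => ->; lia.
- rewrite H1; case: (ss_range y) => [->|[->|->]]; case: hc => ->; lia.
Qed.

Lemma LL2 w y e c : y != w -> (e = 1 \/ e = -1) -> (c = 1 \/ c = -1) ->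
  B (p + (chi w *~ e + chi y *~ c)) -> ss w * e + ss y * c <= 0.
Proof.
move=> yw he hc Bwy.
have wy : w != y by rewrite eq_sym.
case: (eqVneq ((z - p) w) 0) => hw; case: (eqVneq ((z - p) y) 0) => hy.
-
  have [Hw|Hw] : ss w * e = 1 \/ ss w * e <= 0 by case: (ss_range w) => [->|[->|->]]; case: he => ->; lia.
  + have [u [hu Bu]] := ss_inv hw he Hw.
    have M := Pg hu hw hy wy he hc Bwy Bu.
    rewrite Hw (ss_mix hy hc M); case: hc => ->; lia.
  have [Hy|Hy] : ss y * c = 1 \/ ss y * c <= 0 by case: (ss_range y) => [->|[->|->]]; case: hc => ->; lia.
  + have [u [hu Bu]] := ss_inv hy hc Hy.
    have Byw : B (p + (chi y *~ c + chi w *~ e)) by rewrite [chi y *~ c + _]addrC.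
    have M := Pg hu hy hw yw hc he Byw Bu.
    rewrite Hy (ss_mix hw he M); case: he => ->; lia.
  + lia.
- have Byw : B (p + (chi y *~ c + chi w *~ e)) by rewrite [chi y *~ c + _]addrC.
  rewrite addrC; exact: LLgz hy hw hc he Byw.
- exact: LLgz hw hy he hc Bwy.
- have := near2 wy Bwy; rewrite !dl_nz // !ss_nz //; lia.
Qed.

Lemma LL w y e c : (e = 1 \/ e = -1) -> (c = 0 \/ (y != w /\ (c = 1 \/ c = -1))) ->
  B (p + (chi w *~ e + chi y *~ c)) -> ss w * e + ss y * c <= 0.
Proof.
move=> he [c0|[yw hc]] Bwy; last exact: LL2.
subst c; rewrite mulr0 addr0; move: Bwy; rewrite mulr0z addr0 => Bw.
case: (eqVneq ((z - p) w) 0) => hw.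
- case: (lerP (ss w * e) 0) => // H.
  have H1 : ss w * e = 1 by case: (ss_range w) => E; rewrite ?E in H *; case: he => Ee; rewrite Ee in H *; lia.
  have [u [hu Bu]] := ss_inv hw he H1.
  exfalso; exact: (Sg hu hw he Bw Bu).
- have := near1 Bw; rewrite dl_nz // ss_nz //; lia.
Qed.

Lemma dot_e (s : V -> int) w y e c : (c = 0 \/ y != w) -> dot s (chi w *~ e + chi y *~ c) = s w * e + s y * c.
Proof.
case=> [->|yw]; first by rewrite /dot mulr0z addr0 mulr0 addr0; exact: (sum1 (F := fun x a => s x * a) w e (fun x => mulr0 (s x))).
have wy : w != y by rewrite eq_sym.
rewrite /dot; exact: (sum2 (F := fun x a => s x * a) _ _ (fun x => mulr0 (s x)) wy).
Qed.

Lemma LG q : B q -> dot ss (q - p) <= 0.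
Proof.
suff H : forall (n : nat) q, leq (absz (norm1 (q - p))).+1 n -> B q -> dot ss (q - p) <= 0.
  by move=> Bq; apply: (H _ q (ltnSn _)).
clear q; elim=> [//|n IH] q Hn Bq.
rewrite leNgt; apply/negP => Hpos.
have [w Hw] : exists w, 0 < ss w * (q - p) w.
  case: (boolP [exists w, 0 < ss w * (q - p) w]) => [/existsP //|/existsPn Hall].
  have : dot ss (q - p) <= 0 by apply: sumr_le0 => x _; rewrite leNgt; exact: Hall.
  by rewrite leNgt Hpos.
have hw : (q - p) w != 0 by apply/eqP => E; move: Hw; rewrite E mulr0 ltxx.
have Esw : ss w = Num.sg ((q - p) w) by case: (ss_range w) => [E|[E|E]]; rewrite E in Hw *; lia.
have [y [c [By [_ Hc]]]] := exchW Hexc HBp Bq hw.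
have Hce : c = 0 \/ (y != w /\ (c = 1 \/ c = -1)).
  by case: Hc => [->|[yw [hy ->]]]; [left|right; split => //; exact: sgpm].
have := LL (sgpm hw) Hce By.
have -> : ss w * Num.sg ((q - p) w) = 1 by rewrite Esw; case: (sgpm hw) => ->.
move=> Hyc.
case: Hc => [c0|[yw [hy Ec]]]; first by subst c; move: Hyc; rewrite mulr0; lia.
have hy' : (p - q) y != 0 by rewrite -opprB zoppE oppr_eq0.
have Esy : ss y * Num.sg ((p - q) y) = 1.
  rewrite -opprB zoppE; subst c; move: Hyc hy; case: ((q - p) y) => [k|k] Hyc hy; case: (ss_range y) => [E|[E|E]]; rewrite E in Hyc *; lia.
have [y' [c' [Bq' [Hlt Hc']]]] := exchW Hexc Bq HBp hy'.
have Hy'y : c' = 0 \/ y' != y by case: Hc' => [->|[? _]]; [left|right].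
have Hc'r : -1 <= ss y' * c'.
  case: Hc' => [->|[_ [hy2 ->]]]; first by rewrite mulr0.
  by case: (ss_range y') => [->|[->|->]]; case: (sgpm hy2) => ->.
have Hlt' : leq (absz (norm1 (q + (chi y *~ Num.sg ((p - q) y) + chi y' *~ c') - p))).+1 n.
  move: Hlt; rewrite norm1N [norm1 (p - q)]norm1N => Hlt.
  have H1 : leq (absz (norm1 (q + (chi y *~ Num.sg ((p - q) y) + chi y' *~ c') - p))).+1 (absz (norm1 (q - p))).
    by rewrite -ltz_nat !abszE !ger0_norm ?norm1_ge0.
  by apply: leq_trans H1 _; rewrite -ltnS.
have := IH _ Hlt' Bq'.
rewrite addrAC dot_add dot_e // Esy; move: Hc'r Hpos; set b0 := dot ss (q - p); set a0 := ss y' * c'; lia.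
Qed.

End Near.

Lemma ex_min (T : Type) (P : T -> Prop) (f : T -> nat) : (exists x, P x) ->
  exists x, P x /\ forall y, P y -> (f x <= f y)%N.
Proof.
move=> [x Px].
suff H : forall n x, (f x <= n)%N -> P x -> exists x, P x /\ forall y, P y -> (f x <= f y)%N.
  exact: H _ x (leqnn _) Px.
clear x Px; elim=> [|n IH] x Hx Px.
  exists x; split => // y _; move: Hx; rewrite leqn0 => /eqP ->; done.
case: (classic (exists y, P y /\ (f y < f x)%N)) => [[y [Py Hy]]|Hno].
  apply: (IH y) Py; rewrite -ltnS; exact: leq_trans Hy Hx.
exists x; split => // y Py; rewrite leqNgt; apply/negP => Hy; apply: Hno; by exists y.
Qed.

Theorem mainTheorem3 (R : realType) (V : finType) (B : zvec V -> Prop) :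
  (exists v : V, True) -> (exists p, B p) -> delta_exc B -> @hole_free R V B.
Proof.
move=> _ HB Hexc z; split.
  move=> Bz; exists 1%N, (fun _ => z), (fun _ => 1); split => //; split => [i|]; first exact: ler01.
  split; first by rewrite big_ord1.
  by move=> w; rewrite big_ord1 mul1r.
move=> [n [pts [lam [Hpts [Hlam [Hsum Hz]]]]]].
case: (classic (B z)) => // nBz; exfalso.
have [p [Bp Hmin]] := ex_min (fun x => absz (norm1 (z - x))) HB.
have Hnear : forall x, B x -> norm1 (z - p) <= norm1 (z - x).
  move=> x Bx; have := Hmin x Bx; by rewrite -lez_nat !abszE !ger0_norm ?norm1_ge0.
have LGp := LG Hexc Bp Hnear.
set s := ss B z p in LGp.
have Hzp : dot s (z - p) = norm1 (z - p).
  rewrite /dot /norm1; apply: eq_bigr => x _; rewrite /s /ss.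
  case: ifP => [h|/negbFE/eqP h]; last by rewrite h mulr0 normr0.
  rewrite /gg; move: h; case: ((z - p) x) => k h; lia.
have Npos : 0 < norm1 (z - p).
  rewrite lt_def norm1_ge0 andbT; apply/negP => /eqP H0.
  have Hnn : forall y, predT y -> 0 <= `|(z - p) y| by move=> y _; exact: normr_ge0.
  have := psumr_eq0P Hnn H0 => Hx.
  apply: nBz; suff -> : z = p by [].
  apply/ffunP => x; have := Hx x isT; rewrite zsubE => /eqP; rewrite normr_eq0 subr_eq0 => /eqP.
  done.
have Hq : forall i, dot s (pts i) <= dot s p by move=> i; have := LGp _ (Hpts i); rewrite dot_sub subr_le0.
have Hz' : dot s z = dot s p + norm1 (z - p) by rewrite -Hzp dot_sub addrC subrK.
have : ((dot s z)%:~R : R) <= (dot s p)%:~R.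
  rewrite /dot (big_morph _ (intrD _) (mulr0z 1)).
  under eq_bigr => x _ do rewrite intrM Hz mulr_sumr.
  rewrite exchange_big /=.
  apply: (@le_trans _ _ (\sum_(i < n) lam i * (dot s p)%:~R)); last first.
    by rewrite -mulr_suml Hsum mul1r.
  apply: ler_sum => i _.
  have -> : \sum_x (s x)%:~R * (lam i * (pts i x)%:~R) = lam i * (dot s (pts i))%:~R.
    rewrite /dot (big_morph _ (intrD _) (mulr0z 1)) mulr_sumr.
    by apply: eq_bigr => x _; rewrite intrM mulrCA.
  by apply: ler_wpM2l; [exact: Hlam | rewrite ler_int].
rewrite ler_int Hz'; lia.
Qed.
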